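(* Let $f(x)=x^5+px^4+qx^3+rx^2+sx+t$ with real coefficients and let $D$, $L_1$, $L_2$, $D_2$ be as in the context. Suppose $D=0$, $L_1=0$ and $L_2\neq 0$. Then: (a) if $D_2>0$, $f$ has two distinct real double roots and one real simple root; (b) if $D_2<0$, $f$ has a pair of non-real complex conjugate double roots and one real simple root; (c) if $D_2=0$, $f$ has one triple root and two simple roots; in this case, if $L_2>0$ the triple root and both simple roots are real, and if $L_2<0$ the triple root is real and the two simple roots are non-real complex conjugates.
   Context: Let $\alpha_1,\dots,\alpha_5\in\mathbb{C}$ be the roots of $f$ listed with multiplicity. $D=\prod_{1\le i<j\le 5}(\alpha_i-\alpha_j)^2$ is the discriminant of $f$. $L_2=40qs-16p^2s-8rp^3+38rpq+3p^2q^2-12q^3-45r^2$. $L_1=-264ps^2r-12p^3tq^2+36r^3pq-124srpq^2+28srp^3q+260sptq-132p^2qrt+240pr^2t+234sqr^2+32p^4tr+48ptq^3-56sp^3t-80q^2rt+194qs^2p^2-600str-6q^3sp^2+2p^2q^2r^2-12sr^2p^2-54r^4+320s^3-8q^3r^2-8r^3p^3+250qt^2-176q^2s^2+24q^4s-36p^4s^2-100p^2t^2$. $D_2=24p^2q^4s-1100q^3rt+800p^3qst-1735p^2q^2rt-3p^2qr^2s+20pq^3rs-600p^2rst-1150pq^2st+5475pqr^2t-1380pqrs^2+1500qrst+6p^3qr^3+p^4q^2r^2-128p^6rt+660pq^4t-136p^5st-3p^4q^3s-236p^4qs^2+337p^2q^2s^2+48p^5q^2t-357p^3q^3t-12p^4r^2s-45pr^3s+60q^2r^2s-8p^2q^3r^2-500p^2qt^2-24pq^2r^3-1380p^3r^2t+408p^3rs^2-4p^5qrs+1028p^4qrt+11p^3q^2rs+36p^6s^2+100p^4t^2+9p^2r^4-48q^5s+16q^4r^2+160q^3s^2+625q^2t^2-3375r^3t+900r^2s^2$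 (a positive multiple of the discriminant of the degree-2 remainder in the Sturm sequence of $f$). *)

(* Defs.v *)
From HB Require Import structures.
From mathcomp Require Import all_boot all_order all_algebra.
Set Implicit Arguments. Unset Strict Implicit. Unset Printing Implicit Defensive.
Import Order.TTheory GRing.Theory Num.Theory.
Local Open Scope ring_scope.

Section Quintic.
Variable C : numClosedFieldType.

Definition quintic (p q r s t : C) : {poly C} :=
  'X^5 + p%:P * 'X^4 + q%:P * 'X^3 + r%:P * 'X^2 + s%:P * 'X + t%:P.

Definition discr5 (alpha : 'I_5 -> C) : C :=
  \prod_(i < 5) \prod_(j < 5 | (i < j)%N) (alpha i - alpha j) ^+ 2.

Definition L2 (p q r s t : C) : C :=
  40 * q * s - 16 * p^+2 * s - 8 * r * p^+3 + 38 * r * p * q + 3 * p^+2 * q^+2 - 12 * q^+3 - 45 * r^+2.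

Definition L1 (p q r s t : C) : C :=
  -264 * p * s^+2 * r - 12 * p^+3 * t * q^+2 + 36 * r^+3 * p * q - 124 * s * r * p * q^+2 + 28 * s * r * p^+3 * q
  + 260 * s * p * t * q - 132 * p^+2 * q * r * t + 240 * p * r^+2 * t + 234 * s * q * r^+2 + 32 * p^+4 * t * r
  + 48 * p * t * q^+3 - 56 * s * p^+3 * t - 80 * q^+2 * r * t + 194 * q * s^+2 * p^+2 - 600 * s * t * r
  - 6 * q^+3 * s * p^+2 + 2 * p^+2 * q^+2 * r^+2 - 12 * s * r^+2 * p^+2 - 54 * r^+4 + 320 * s^+3
  - 8 * q^+3 * r^+2 - 8 * r^+3 * p^+3 + 250 * q * t^+2 - 176 * q^+2 * s^+2 + 24 * q^+4 * s
  - 36 * p^+4 * s^+2 - 100 * p^+2 * t^+2.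

Definition D2 (p q r s t : C) : C :=
  24 * p^+2 * q^+4 * s - 1100 * q^+3 * r * t + 800 * p^+3 * q * s * t - 1735 * p^+2 * q^+2 * r * t
  - 3 * p^+2 * q * r^+2 * s + 20 * p * q^+3 * r * s - 600 * p^+2 * r * s * t - 1150 * p * q^+2 * s * t
  + 5475 * p * q * r^+2 * t - 1380 * p * q * r * s^+2 + 1500 * q * r * s * t + 6 * p^+3 * q * r^+3
  + p^+4 * q^+2 * r^+2 - 128 * p^+6 * r * t + 660 * p * q^+4 * t - 136 * p^+5 * s * t
  - 3 * p^+4 * q^+3 * s - 236 * p^+4 * q * s^+2 + 337 * p^+2 * q^+2 * s^+2 + 48 * p^+5 * q^+2 * t
  - 357 * p^+3 * q^+3 * t - 12 * p^+4 * r^+2 * s - 45 * p * r^+3 * s + 60 * q^+2 * r^+2 * s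
  - 8 * p^+2 * q^+3 * r^+2 - 500 * p^+2 * q * t^+2 - 24 * p * q^+2 * r^+3 - 1380 * p^+3 * r^+2 * t
  + 408 * p^+3 * r * s^+2 - 4 * p^+5 * q * r * s + 1028 * p^+4 * q * r * t + 11 * p^+3 * q^+2 * r * s
  + 36 * p^+6 * s^+2 + 100 * p^+4 * t^+2 + 9 * p^+2 * r^+4 - 48 * q^+5 * s + 16 * q^+4 * r^+2
  + 160 * q^+3 * s^+2 + 625 * q^+2 * t^+2 - 3375 * r^+3 * t + 900 * r^+2 * s^+2.

End Quintic.

(* Main.v *)
Require Import Defs.
From HB Require Import structures.
From mathcomp Require Import all_boot all_order all_algebra.
From mathcomp Require Import ring.
Import Order.TTheory GRing.Theory Num.Theory.
Local Open Scope ring_scope.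

Section S.
Variable C : numClosedFieldType.

Definition Concl (p q r s t : C) : Prop :=
  (0 < D2 p q r s t ->
     exists a b c : C, [/\ a \is Num.real, b \is Num.real, c \is Num.real,
       [/\ a != b, a != c & b != c] &
       [/\ mup a (quintic p q r s t) = 2%N, mup b (quintic p q r s t) = 2%N
         & mup c (quintic p q r s t) = 1%N]]) /\
  (D2 p q r s t < 0 ->
     exists z c : C, [/\ z \isn't Num.real, c \is Num.real,
       mup z (quintic p q r s t) = 2%N, mup (z^*) (quintic p q r s t) = 2%N
       & mup c (quintic p q r s t) = 1%N]) /\
  (D2 p q r s t = 0 ->
     exists a b c : C, [/\ [/\ a != b, a != c & b != c],
       [/\ mup a (quintic p q r s t) = 3%N, mup b (quintic p q r s t) = 1%N
         & mup c (quintic p q r s t) = 1%N],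
       (0 < L2 p q r s t -> [/\ a \is Num.real, b \is Num.real & c \is Num.real])
       & (L2 p q r s t < 0 ->
            [/\ a \is Num.real, b \isn't Num.real & c = b^*])]).

Lemma quintic_inj (p q r s t p' q' r' s' t' : C) :
  quintic p q r s t = quintic p' q' r' s' t' ->
  [/\ p = p', q = q', r = r', s = s' & t = t'].
Proof.
move=> E.
have cf : forall i, (quintic p q r s t)`_i = (quintic p' q' r' s' t')`_i by rewrite E.
have K (a b c d e : C) i : (quintic a b c d e)`_i =
   (i == 5%N)%:R + a * (i == 4%N)%:R + b * (i == 3%N)%:R + c * (i == 2%N)%:R
   + d * (i == 1%N)%:R + e * (i == 0%N)%:R.
  by rewrite /quintic !coefD !coefCM !coefXn coefX coefC; case: i => [|[|[|[|[|[|i]]]]]] /=; ring.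
have := cf 4%N; have := cf 3%N; have := cf 2%N; have := cf 1%N; have := cf 0%N.
by rewrite !K /= !(mulr0, mulr1, add0r, addr0) => -> -> -> -> ->.
Qed.

Definition P5 (a b c d e : C) : {poly C} :=
  ('X - a%:P) * ('X - b%:P) * ('X - c%:P) * ('X - d%:P) * ('X - e%:P).

Definition cp (a b c d e : C) := -(a+b+c+d+e).
Definition cq (a b c d e : C) := a*b+a*c+a*d+a*e+b*c+b*d+b*e+c*d+c*e+d*e.
Definition cr (a b c d e : C) := -(a*b*c+a*b*d+a*b*e+a*c*d+a*c*e+a*d*e+b*c*d+b*c*e+b*d*e+c*d*e).
Definition cs (a b c d e : C) := a*b*c*d+a*b*c*e+a*b*d*e+a*c*d*e+b*c*d*e.
Definition ct (a b c d e : C) := -(a*b*c*d*e).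

Lemma P5E (a b c d e : C) : P5 a b c d e = quintic
  (cp a b c d e) (cq a b c d e) (cr a b c d e) (cs a b c d e) (ct a b c d e).
Proof.
rewrite /P5 /quintic /cp /cq /cr /cs /ct !(polyCN, polyCD, polyCM). ring.
Qed.

Lemma P5_seq (a b c d e : C) : P5 a b c d e = \prod_(y <- [:: a; b; c; d; e]) ('X - y%:P).
Proof. by rewrite !big_cons big_nil mulr1 /P5 !mulrA. Qed.

Lemma mupP5 x (a b c d e : C) : mup x (P5 a b c d e) = count_mem x [:: a; b; c; d; e].
Proof. by rewrite P5_seq mu_prod_XsubC. Qed.

Lemma rootP5 z (a b c d e : C) : (P5 a b c d e).[z] = 0 ->
  z = a \/ z = b \/ z = c \/ z = d \/ z = e.
Proof.
rewrite /P5 !hornerE => /eqP; rewrite !mulf_eq0 !subr_eq0.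
by case/orP=> [/orP[/orP[/orP[]|]|]|] /eqP; tauto.
Qed.

Lemma hornerQ (p q r s t z : C) : (quintic p q r s t).[z] =
  z^+5 + p * z^+4 + q * z^+3 + r * z^+2 + s * z + t.
Proof. by rewrite /quintic !hornerE. Qed.

Lemma conj_root (p q r s t z : C) :
  p \is Num.real -> q \is Num.real -> r \is Num.real ->
  s \is Num.real -> t \is Num.real ->
  (quintic p q r s t).[z] = 0 -> (quintic p q r s t).[z^*] = 0.
Proof.
move=> Rp Rq Rr Rs Rt; rewrite !hornerQ => h.
have cD : forall x y : C, (x + y)^* = x^* + y^* by move=> x y; rewrite rmorphD.
have cM : forall x y : C, (x * y)^* = x^* * y^* by move=> x y; rewrite rmorphM.
have cX : forall (x : C) n, (x ^+ n)^* = x^* ^+ n by move=> x n; rewrite rmorphXn.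
have := congr1 (fun x => x^*) h.
rewrite /= rmorph0 !cD !cX !cM (conj_Creal Rp) (conj_Creal Rq) (conj_Creal Rr) (conj_Creal Rs) (conj_Creal Rt).
done.
Qed.

Lemma cjB (x y : C) : (x - y)^* = x^* - y^*. Proof. by rewrite rmorphB. Qed.

Lemma sq_conj (x : C) : (x - x^*)^+2 = - `|x - x^*|^+2.
Proof. by rewrite normCK cjB conjCK; ring. Qed.

Lemma norm_prod (a x : C) : a \is Num.real -> (a - x) * (a - x^*) = `|a - x|^+2.
Proof. by move=> Ra; rewrite normCK cjB (conj_Creal Ra). Qed.


Lemma cjD (x y : C) : (x + y)^* = x^* + y^*. Proof. by rewrite rmorphD. Qed.
Lemma cjN (x : C) : (- x)^* = - x^*. Proof. by rewrite rmorphN. Qed.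
Lemma cj_sym {x y : C} : x^* = y -> y^* = x. Proof. by move<-; rewrite conjCK. Qed.
Lemma two_cancel (x y : C) : x + x = y + y -> x = y.
Proof.
move=> h; have H : (x - y) *+ 2 = 0.
  have -> : (x - y) *+ 2 = (x + x) - (y + y) by rewrite mulr2n; ring.
  by rewrite h subrr.
by move/eqP: H; rewrite mulrn_eq0 /= subr_eq0 => /eqP.
Qed.
Lemma lin_eq {x y u v : C} : u = v -> x - y = u - v -> x = y.
Proof. by move=> -> /eqP; rewrite subrr subr_eq0 => /eqP. Qed.
Lemma pos_norm (x : C) n : x != 0 -> 0 < `|x| ^+ n.
Proof. by move=> h; apply: exprn_gt0; rewrite normr_gt0. Qed.
Lemma pos_sq (x : C) : x \is Num.real -> x != 0 -> 0 < x ^+ 2.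
Proof. by move=> Rx h; rewrite real_exprn_even_gt0 ?h ?orbT. Qed.

Lemma lemA (p q r s t a c d : C) :
  p \is Num.real -> q \is Num.real -> r \is Num.real ->
  s \is Num.real -> t \is Num.real ->
  quintic p q r s t = P5 a a a c d -> L2 p q r s t != 0 -> Concl p q r s t.
Proof.
move=> Rp Rq Rr Rs Rt E HL2.
move: (etrans E (P5E a a a c d)) => /quintic_inj [e1 e2 e3 e4 e5].
have eL2 : L2 p q r s t = 3 * ((a-c)*(a-d)*(c-d))^+2.
  by rewrite e1 e2 e3 e4 e5 /L2 /cp /cq /cr /cs /ct; ring.
have eD2 : D2 p q r s t = 0.
  by rewrite e1 e2 e3 e4 e5 /D2 /cp /cq /cr /cs /ct; ring.
have nz : (a-c)*(a-d)*(c-d) != 0.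
  by apply: contra HL2 => /eqP h; rewrite eL2 h expr2 !mulr0.
move: (nz); rewrite !mulf_eq0 !subr_eq0 !negb_or => /andP[/andP[ac ad] cd].
have ca : c != a by rewrite eq_sym.
have da : d != a by rewrite eq_sym.
have dc : d != c by rewrite eq_sym.
have mupE x : mup x (quintic p q r s t) = count_mem x [:: a; a; a; c; d] by rewrite E mupP5.
have rootE z : (quintic p q r s t).[z] = 0 -> z = a \/ z = c \/ z = d.
  by rewrite E => /rootP5; tauto.
have rootC z : z = a \/ z = c \/ z = d -> z^* = a \/ z^* = c \/ z^* = d.
  move=> hz; apply: rootE; apply: conj_root => //; rewrite E /P5 !hornerE.
  by case: hz => [->|[->|->]]; rewrite subrr !(mulr0, mul0r).
have p_eq : a^*+a^*+a^*+c^*+d^* = a+a+a+c+d.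
  by have := conj_Creal Rp; rewrite e1 /cp cjN !cjD => /oppr_inj.
have Ra : a^* = a.
  case: (rootC a (or_introl erefl)) => [//|[hac|had]].
  - case: (rootC d (or_intror (or_intror erefl))) => [hda|[hdc|hdd]].
    + by move: cd; rewrite -(cj_sym hda) hac eqxx.
    + by move: ad; rewrite -(cj_sym hdc) (cj_sym hac) eqxx.
    + move: p_eq; rewrite hac hdd (cj_sym hac) => h.
      have : c + c = a + a by apply: (lin_eq h); ring.
      by move/two_cancel/eqP; rewrite (negbTE ca).
  - case: (rootC c (or_intror (or_introl erefl))) => [hca|[hcc|hcd]].
    + by move: dc; rewrite -(cj_sym hca) had eqxx.
    + move: p_eq; rewrite had hcc (cj_sym had) => h.
      have : d + d = a + a by apply: (lin_eq h); ring.
      by move/two_cancel/eqP; rewrite (negbTE da).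
    + by move: ac; rewrite -(cj_sym hcd) (cj_sym had) eqxx.
have RaR : a \is Num.real by apply/CrealP.
split; first by rewrite eD2 ltxx.
split; first by rewrite eD2 ltxx.
move=> _; exists a, c, d; split.
- by rewrite ac ad cd.
- by rewrite !mupE /= !eqxx (negbTE ca) (negbTE da) (negbTE ac) (negbTE dc) (negbTE ad) (negbTE cd).
- case: (rootC c (or_intror (or_introl erefl))) => [hca|[hcc|hcd]].
  + by move: ac; rewrite -(cj_sym hca) Ra eqxx.
  + case: (rootC d (or_intror (or_intror erefl))) => [hda|[hdc|hdd]].
    * by move: ad; rewrite -(cj_sym hda) Ra eqxx.
    * by move: cd; rewrite -(cj_sym hdc) hcc eqxx.
    * by move=> _; split => //; apply/CrealP.
  + move=> hL; have H : L2 p q r s t < 0; last by move: (lt_trans hL H); rewrite ltxx.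
    rewrite eL2 -hcd.
    have -> : ((a - c) * (a - c^*) * (c - c^*)) ^+ 2 = ((a - c) * (a - c^*))^+2 * (c - c^*)^+2 by ring.
    rewrite norm_prod // sq_conj mulrN mulrN oppr_lt0 !mulr_gt0 ?ltr0n //.
    all: try by rewrite normr_gt0 subr_eq0 ?hcd.
- case: (rootC c (or_intror (or_introl erefl))) => [hca|[hcc|hcd]].
  + by move: ac; rewrite -(cj_sym hca) Ra eqxx.
  + case: (rootC d (or_intror (or_intror erefl))) => [hda|[hdc|hdd]].
    * by move: ad; rewrite -(cj_sym hda) Ra eqxx.
    * by move: cd; rewrite -(cj_sym hdc) hcc eqxx.
    * move=> hL; have H : 0 < L2 p q r s t; last by move: (lt_trans hL H); rewrite ltxx.
      rewrite eL2 mulr_gt0 ?ltr0n //.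
      apply: pos_sq => //; rewrite !rpredM ?rpredB //; by apply/CrealP.
  + move=> _; split => //.
    * apply/negP => Rc; move/CrealP: Rc => h; by move: cd; rewrite -hcd h eqxx.
Qed.

Lemma lemB (p q r s t a b d : C) :
  p \is Num.real -> q \is Num.real -> r \is Num.real ->
  s \is Num.real -> t \is Num.real ->
  quintic p q r s t = P5 a a b b d -> L2 p q r s t != 0 -> Concl p q r s t.
Proof.
move=> Rp Rq Rr Rs Rt E HL2.
move: (etrans E (P5E a a b b d)) => /quintic_inj [e1 e2 e3 e4 e5].
have eL2 : L2 p q r s t = 4 * ((a-b)*(a-d)*(b-d))^+2.
  by rewrite e1 e2 e3 e4 e5 /L2 /cp /cq /cr /cs /ct; ring.
have eD2 : D2 p q r s t = 4 * (a-b)^+6 * ((a-d)*(b-d))^+4.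
  by rewrite e1 e2 e3 e4 e5 /D2 /cp /cq /cr /cs /ct; ring.
have nz : (a-b)*(a-d)*(b-d) != 0.
  by apply: contra HL2 => /eqP h; rewrite eL2 h expr2 !mulr0.
move: (nz); rewrite !mulf_eq0 !subr_eq0 !negb_or => /andP[/andP[ab ad] bd].
have ba : b != a by rewrite eq_sym.
have da : d != a by rewrite eq_sym.
have db : d != b by rewrite eq_sym.
have mupE x : mup x (quintic p q r s t) = count_mem x [:: a; a; b; b; d] by rewrite E mupP5.
have rootE z : (quintic p q r s t).[z] = 0 -> z = a \/ z = b \/ z = d.
  by rewrite E => /rootP5; tauto.
have rootC z : z = a \/ z = b \/ z = d -> z^* = a \/ z^* = b \/ z^* = d.
  move=> hz; apply: rootE; apply: conj_root => //; rewrite E /P5 !hornerE.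
  by case: hz => [->|[->|->]]; rewrite subrr !(mulr0, mul0r).
have p_eq : a^*+a^*+b^*+b^*+d^* = a+a+b+b+d.
  by have := conj_Creal Rp; rewrite e1 /cp cjN !cjD => /oppr_inj.
have Rd : d^* = d.
  case: (rootC d (or_intror (or_intror erefl))) => [hda|[hdb|//]].
  - case: (rootC b (or_intror (or_introl erefl))) => [hba|[hbb|hbd]].
    + by move: bd; rewrite -(cj_sym hba) (cj_sym hda) eqxx.
    + move: p_eq; rewrite (cj_sym hda) hbb hda => h.
      have : d = a by apply: (lin_eq h); ring.
      by move/eqP; rewrite (negbTE da).
    + by move: ab; rewrite -(cj_sym hbd) hda eqxx.
  - case: (rootC a (or_introl erefl)) => [haa|[hab|had]].
    + move: p_eq; rewrite (cj_sym hdb) haa hdb => h.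
      have : d = b by apply: (lin_eq h); ring.
      by move/eqP; rewrite (negbTE db).
    + by move: ad; rewrite -(cj_sym hab) (cj_sym hdb) eqxx.
    + by move: ba; rewrite -(cj_sym had) hdb eqxx.
have RdR : d \is Num.real by apply/CrealP.
case: (rootC a (or_introl erefl)) => [haa|[hab|had]]; last first.
- by move: ad; rewrite -(cj_sym had) Rd eqxx.
-
  have neg : D2 p q r s t < 0.
    rewrite eD2 -hab.
    have -> : 4 * (a - a^*)^+6 * ((a-d)*(a^*-d))^+4 = 4 * ((a - a^*)^+2)^+3 * ((d-a)*(d-a^*))^+4 by ring.
    rewrite sq_conj norm_prod //.
    have -> : forall x y : C, 4 * (-x)^+3 * y = - (4 * x^+3 * y) by move=> x y; ring.
    rewrite oppr_lt0 !mulr_gt0 ?ltr0n //.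
    all: try by rewrite normr_gt0 subr_eq0 ?hab // eq_sym.
  split; first by move=> h; move: (lt_trans h neg); rewrite ltxx.
  split; last by move=> h; move: neg; rewrite h ltxx.
  move=> _; exists a, d; split => //.
  + apply/negP => Ra; move/CrealP: Ra => h; by move: ab; rewrite -hab h eqxx.
  + by rewrite !mupE /= !eqxx ?(negbTE ab) ?(negbTE ad) ?(negbTE ba) ?(negbTE bd) ?(negbTE da) ?(negbTE db).
  + by rewrite hab !mupE /= !eqxx ?(negbTE ab) ?(negbTE ad) ?(negbTE ba) ?(negbTE bd) ?(negbTE da) ?(negbTE db).
  + by rewrite !mupE /= !eqxx ?(negbTE ab) ?(negbTE ad) ?(negbTE ba) ?(negbTE bd) ?(negbTE da) ?(negbTE db).
- have Rb : b^* = b.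
    case: (rootC b (or_intror (or_introl erefl))) => [hba|[//|hbd]].
    + by move: ab; rewrite -(cj_sym hba) haa eqxx.
    + by move: bd; rewrite -(cj_sym hbd) Rd eqxx.
  have RaR : a \is Num.real by apply/CrealP.
  have RbR : b \is Num.real by apply/CrealP.
  have pos : 0 < D2 p q r s t.
    rewrite eD2.
    have -> : (a - b)^+6 = ((a - b)^+2)^+3 by ring.
    have -> : ((a - d) * (b - d))^+4 = (((a - d) * (b - d))^+2)^+2 by ring.
    apply: mulr_gt0; first apply: mulr_gt0; first by rewrite ltr0n.
      by apply: exprn_gt0; apply: pos_sq; rewrite ?rpredB ?subr_eq0.
    apply: exprn_gt0; apply: pos_sq; rewrite ?rpredM ?rpredB //.
    by rewrite !mulf_eq0 !subr_eq0 negb_or ad bd.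
  split.
    move=> _; exists a, b, d; split => //; try by rewrite ab ad bd.
    by rewrite !mupE /= !eqxx ?(negbTE ab) ?(negbTE ad) ?(negbTE ba) ?(negbTE bd) ?(negbTE da) ?(negbTE db).
  split; first by move=> h; move: (lt_trans h pos); rewrite ltxx.
  by move=> h; move: pos; rewrite h ltxx.
Qed.

Lemma core (p q r s t a b c d : C) :
  p \is Num.real -> q \is Num.real -> r \is Num.real ->
  s \is Num.real -> t \is Num.real ->
  quintic p q r s t = P5 a a b c d -> L1 p q r s t = 0 -> L2 p q r s t != 0 ->
  Concl p q r s t.
Proof.
move=> Rp Rq Rr Rs Rt E HL1 HL2.
move: (etrans E (P5E a a b c d)) => /quintic_inj [e1 e2 e3 e4 e5].
have eL1 : L1 p q r s t = 2 * ((a-b)*(a-c)*(a-d)*(b-c)*(b-d)*(c-d))^+2.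
  by rewrite e1 e2 e3 e4 e5 /L1 /cp /cq /cr /cs /ct; ring.
have : ((a-b)*(a-c)*(a-d)*(b-c)*(b-d)*(c-d)) == 0.
  by move: HL1; rewrite eL1 => /eqP; rewrite mulf_eq0 pnatr_eq0 /= sqrf_eq0.
rewrite !mulf_eq0 !subr_eq0.
case/orP => [/orP[/orP[/orP[/orP[|]|]|]|]|] /eqP h.
- by apply: (@lemA p q r s t a c d) => //; rewrite E -h.
- by apply: (@lemA p q r s t a b d) => //; rewrite E -h /P5; ring.
- by apply: (@lemA p q r s t a b c) => //; rewrite E -h /P5; ring.
- by apply: (@lemB p q r s t a b d) => //; rewrite E -h.
- by apply: (@lemB p q r s t a b c) => //; rewrite E -h /P5; ring.
- by apply: (@lemB p q r s t a c b) => //; rewrite E -h /P5; ring.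
Qed.

End S.

Theorem mainTheorem3 (C : numClosedFieldType) (p q r s t : C)
  (alpha : 'I_5 -> C) :
  p \is Num.real -> q \is Num.real -> r \is Num.real ->
  s \is Num.real -> t \is Num.real ->
  quintic p q r s t = \prod_(i < 5) ('X - (alpha i)%:P) ->
  discr5 alpha = 0 -> L1 p q r s t = 0 -> L2 p q r s t != 0 ->
  (* (a) *)
  (0 < D2 p q r s t ->
     exists a b c : C, [/\ a \is Num.real, b \is Num.real, c \is Num.real,
       [/\ a != b, a != c & b != c] &
       [/\ mup a (quintic p q r s t) = 2%N, mup b (quintic p q r s t) = 2%N
         & mup c (quintic p q r s t) = 1%N]]) /\
  (* (b) *)
  (D2 p q r s t < 0 ->
     exists z c : C, [/\ z \isn't Num.real, c \is Num.real,
       mup z (quintic p q r s t) = 2%N, mup (z^*) (quintic p q r s t) = 2%N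
       & mup c (quintic p q r s t) = 1%N]) /\
  (* (c) *)
  (D2 p q r s t = 0 ->
     exists a b c : C, [/\ [/\ a != b, a != c & b != c],
       [/\ mup a (quintic p q r s t) = 3%N, mup b (quintic p q r s t) = 1%N
         & mup c (quintic p q r s t) = 1%N],
       (0 < L2 p q r s t -> [/\ a \is Num.real, b \is Num.real & c \is Num.real])
       & (L2 p q r s t < 0 ->
            [/\ a \is Num.real, b \isn't Num.real & c = b^*])]).
Proof.
move=> Rp Rq Rr Rs Rt E0 HD HL1 HL2.
pose b (k : nat) := alpha (inord k).
have Hb (i : 'I_5) : alpha i = b i by rewrite /b inord_val.
have E : quintic p q r s t = @P5 C (b 0%N) (b 1%N) (b 2%N) (b 3%N) (b 4%N).
  rewrite E0 !big_ord_recl big_ord0 mulr1 /P5 !mulrA.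
  by rewrite !Hb.
have [i [j [lt_ij eqij]]] : exists i j : 'I_5, (i < j)%N /\ alpha i = alpha j.
  move/eqP: HD; rewrite /discr5 => /prodf_eq0 [i _ /prodf_eq0 [j ltij]].
  by rewrite expf_eq0 subr_eq0 /= => /eqP h; exists i, j.
move: eqij; rewrite !Hb.
have : (i < j < 5)%N by rewrite lt_ij ltn_ord.
move: (nat_of_ord i) (nat_of_ord j) => i' j'.
move=> /andP[hij hj5] h.
suff : @Concl C p q r s t by [].
have fin I K L M : quintic p q r s t = @P5 C (b I) (b I) (b K) (b L) (b M) -> @Concl C p q r s t.
  by move=> EE; apply: (@core C p q r s t (b I) (b K) (b L) (b M)).
move: hij hj5 h; case: i' => [|[|[|[|[|i']]]]]; case: j' => [|[|[|[|[|j']]]]] //= _ _ h.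
- by apply: (fin 0%N 2%N 3%N 4%N); rewrite E /P5 h; ring.
- by apply: (fin 0%N 1%N 3%N 4%N); rewrite E /P5 h; ring.
- by apply: (fin 0%N 1%N 2%N 4%N); rewrite E /P5 h; ring.
- by apply: (fin 0%N 1%N 2%N 3%N); rewrite E /P5 h; ring.
- by apply: (fin 1%N 0%N 3%N 4%N); rewrite E /P5 h; ring.
- by apply: (fin 1%N 0%N 2%N 4%N); rewrite E /P5 h; ring.
- by apply: (fin 1%N 0%N 2%N 3%N); rewrite E /P5 h; ring.
- by apply: (fin 2%N 0%N 1%N 4%N); rewrite E /P5 h; ring.
- by apply: (fin 2%N 0%N 1%N 3%N); rewrite E /P5 h; ring.
- by apply: (fin 3%N 0%N 1%N 2%N); rewrite E /P5 h; ring.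
Qed.
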